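(* Let $G$ be a finite simple undirected bipartite graph with $n$ vertices, and let $m$ be a nonnegative integer such that $G$ does not contain more than $m$ pairwise vertex-disjoint $4k$-cycles. Then \[ \operatorname{per}(G)=\begin{cases} (-1)^{n/2}\displaystyle\sum_{z=0}^{m}\frac{4^z}{z!}\sum_{T_z}\det(G\setminus T_z), & \text{if } n \text{ is even},\\[2mm] 0, & \text{if } n \text{ is odd},\end{cases} \] where, for each $z$, the inner sum runs over all ordered tuples $T_z=(R_1,\dots,R_z)$ of $z$ mutually vertex-disjoint $4k$-cycles of $G$.
   Context: For a graph $G$ with vertex set $\{v_1,\dots,v_n\}$, the adjacency matrix $A(G)=(a_{ij})$ is the $n\times n$ matrix with $a_{ij}=1$ if $v_i$ and $v_j$ are adjacent and $a_{ij}=0$ otherwise. $\det(G)$ and $\operatorname{per}(G)$ denote the determinant and permanent of $A(G)$, where $\operatorname{per}(M)=\sum_{\sigma\in S_n}\prod_{i=1}^n a_{i,\sigma(i)}$. A cycle of length $l$ is a sequence of distinct vertices $u_1,\dots,u_l$ with $u_i\sim u_{i+1}$ for $i<l$ and $u_l\sim u_1$ (considered as a subgraph); a $4k$-cycle is a cycle whose length is a positive multiple of $4$. For a tuple $T_z$ of vertex-disjoint cycles, $\det(G\setminus T_z)$ denotes the determinant of the principal submatrix of $A(G)$ obtained by deleting the rows and columns corresponding to all vertices lying on the cycles of $T_z$ (the determinant of the empty matrix being $1$). For $z=0$ the only tuple is the empty tuple $T_0$, so the $z=0$ term is $\det(G)$. *)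

(* Defs.v *)
From mathcomp Require Import all_boot all_order all_fingroup all_algebra.
Set Implicit Arguments.
Unset Strict Implicit.
Unset Printing Implicit Defensive.
Import GRing.Theory.
Local Open Scope ring_scope.

Definition simple_graph (n : nat) (e : rel 'I_n) : Prop :=
  symmetric e /\ irreflexive e.

Definition bipartite (n : nat) (e : rel 'I_n) : Prop :=
  exists f : 'I_n -> bool, forall i j, e i j -> f i != f j.

Definition adjmx (n : nat) (e : rel 'I_n) : 'M[rat]_n :=
  \matrix_(i, j) (e i j)%:R.

Definition permanent (R : comNzRingType) (k : nat) (M : 'M[R]_k) : R :=
  \sum_(s : 'S_k) \prod_(i < k) M i (s i).

Definition principal_submx (R : Type) (n : nat) (A : 'M[R]_n)
    (S : {set 'I_n}) : 'M[R]_#|S| :=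
  \matrix_(i, j) A (enum_val i) (enum_val j).

Definition cyc_edges (n : nat) (s : seq 'I_n) : {set {set 'I_n}} :=
  [set [set x; next s x] | x in s].

(* A cycle (as a subgraph, i.e. its edge set C) whose length is a positive
   multiple of 4: C is the edge set of u_1,...,u_l, distinct vertices with
   u_i ~ u_{i+1} and u_l ~ u_1, where 0 < l and 4 | l. *)
Definition is_4kcycle (n : nat) (e : rel 'I_n) (C : {set {set 'I_n}}) : bool :=
  [exists l : 'I_n.+1,
     [&& (0 < (l : nat))%N, (4 %| l)%N &
      [exists s : l.-tuple 'I_n,
         [&& uniq s, path.cycle e s & C == cyc_edges s]]]].

Definition cyc_verts (n : nat) (C : {set {set 'I_n}}) : {set 'I_n} :=
  \bigcup_(x in C) x.

Definition disj_4kcycle_tuple (n : nat) (e : rel 'I_n) (z : nat)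
    (t : z.-tuple {set {set 'I_n}}) : bool :=
  all (is_4kcycle e) t &&
  [forall i : 'I_z, forall j : 'I_z,
     (i != j) ==> [disjoint cyc_verts (tnth t i) & cyc_verts (tnth t j)]].

Definition tuple_verts (n : nat) (z : nat) (t : z.-tuple {set {set 'I_n}})
  : {set 'I_n} := \bigcup_(i < z) cyc_verts (tnth t i).

Definition det_del (n : nat) (e : rel 'I_n) (z : nat)
    (t : z.-tuple {set {set 'I_n}}) : rat :=
  \det (principal_submx (adjmx e) (~: tuple_verts t)).

(* Main.v *)
Require Import Defs.
From mathcomp Require Import all_boot all_order all_fingroup all_algebra.
From mathcomp Require Import ring.
Import GRing.Theory.

Section FileA.
Set Implicit Arguments. Unset Strict Implicit. Unset Printing Implicit Defensive.
Import Num.Theory.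

Section PermOrb.
Variable T : finType.
Implicit Types (s : {perm T}) (x y : T).

Lemma porbit_iterP s x y : reflect (exists i, y = iter i s x) (y \in porbit s x).
Proof.
apply: (iffP (porbitP s x y)) => -[i ->]; exists i; by rewrite permX.
Qed.

Lemma porbit_fix s x : s x = x -> porbit s x = [set x].
Proof.
move=> sx; apply/setP=> y; rewrite inE; apply/porbit_iterP/eqP => [[i ->]|->].
  by elim: i => //= i ->.
by exists 0.
Qed.

Lemma porbit_s s x y : (s y \in porbit s x) = (y \in porbit s x).
Proof.
by have := porbit_perm s 1 y; rewrite expg1 porbit_sym => ->; rewrite porbit_sym.
Qed.

Lemma porbits_card s : \sum_(O in porbits s) #|O| = #|T|.
Proof.
transitivity (\sum_(O in porbits s) \sum_(x : T) (x \in O : nat)).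
  by apply: eq_bigr => O _; rewrite -sum1_card big_mkcond /=; apply: eq_bigr => x _; case: (x \in O).
rewrite exchange_big /= -sum1_card; apply: eq_bigr => x _.
rewrite -big_mkcondr /= (bigD1 (porbit s x)) /=; last first.
  by rewrite imset_f // porbit_id.
rewrite big1 // => O /andP[/andP[/imsetP[y _ ->] xO] ne].
by case/negP: ne; rewrite eq_sym eq_porbit_mem.
Qed.

Lemma odd_perm_orbits s : odd_perm s = odd (\sum_(O in porbits s) (#|O|).-1).
Proof.
rewrite /odd_perm -{1}(porbits_card s).
have -> : \sum_(O in porbits s) #|O| = \sum_(O in porbits s) (#|O|).-1 + #|porbits s|.
  rewrite -sum1_card -big_split /=; apply: eq_bigr => O /imsetP[x _ ->].
  by rewrite addn1 prednK // lt0n card_porbit_neq0.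
by rewrite oddD -addbA addbb addbF.
Qed.

End PermOrb.

End FileA.

Section FileB.
Set Implicit Arguments. Unset Strict Implicit. Unset Printing Implicit Defensive.
Import Num.Theory.
Local Open Scope ring_scope.

Section DetSub.
Variables (R : comNzRingType) (n : nat) (S : {set 'I_n}).
Local Notation k := #|S|.
Local Notation g := (@enum_val _ (mem S)).

Lemma g_inj : injective g.
Proof. exact: enum_val_inj. Qed.

Lemma in_S_g x : x \in S -> exists i, x = g i.
Proof. by move=> xS; exists (enum_rank_in xS x); rewrite fintype.enum_rankK_in. Qed.

Definition liftf (p : 'S_k) (x : 'I_n) : 'I_n :=
  if [pick i | g i == x] is Some i then g (p i) else x.

Lemma liftfE p i : liftf p (g i) = g (p i).
Proof.
rewrite /liftf; case: pickP => [j /eqP /g_inj -> //|/(_ i)]; by rewrite eqxx.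
Qed.

Lemma liftfN p x : x \notin S -> liftf p x = x.
Proof.
move=> xS; rewrite /liftf; case: pickP => // j /eqP ej.
by case/negP: xS; rewrite -ej enum_valP.
Qed.

Lemma liftf_inj p : injective (liftf p).
Proof.
move=> x y.
have [xS|xS] := boolP (x \in S); have [yS|yS] := boolP (y \in S).
- case: (in_S_g xS) => i ->; case: (in_S_g yS) => j ->.
  by rewrite !liftfE => /g_inj /perm_inj ->.
- case: (in_S_g xS) => i ->; rewrite liftfE liftfN // => E.
  by case/negP: yS; rewrite -E enum_valP.
- case: (in_S_g yS) => i ->; rewrite liftfE liftfN // => E.
  by case/negP: xS; rewrite E enum_valP.
- by rewrite !liftfN.
Qed.

Definition liftp (p : 'S_k) : 'S_n := perm (@liftf_inj p).

Lemma liftpE p i : liftp p (g i) = g (p i).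
Proof. by rewrite permE liftfE. Qed.

Lemma liftpN p x : x \notin S -> liftp p x = x.
Proof. by move=> xS; rewrite permE liftfN. Qed.

Lemma liftp_eq (p q : 'S_n) : (forall i, p (g i) = q (g i)) ->
  (forall x, x \notin S -> p x = x) -> (forall x, x \notin S -> q x = x) -> p = q.
Proof.
move=> H1 H2 H3; apply/permP => x; have [xS|xS] := boolP (x \in S).
  by case: (in_S_g xS) => i ->.
by rewrite H2 ?H3.
Qed.

Lemma liftpM p q : liftp (p * q)%g = (liftp p * liftp q)%g.
Proof.
apply: liftp_eq => [i|x xS|x xS]; first by rewrite permM !liftpE permM.
  by rewrite liftpN.
by rewrite !permM !liftpN.
Qed.

Lemma liftp1 : liftp 1%g = 1%g.
Proof.
apply: liftp_eq => [i|x xS|x xS]; first by rewrite liftpE !perm1.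
  by rewrite liftpN ?perm1.
by rewrite perm1.
Qed.

Lemma liftpT a b : liftp (tperm a b) = tperm (g a) (g b).
Proof.
apply: liftp_eq => [i|x xS|x xS]; first by rewrite liftpE (inj_tperm _ _ _ g_inj).
  by rewrite liftpN.
rewrite // tpermD //; apply/eqP => E; case/negP: xS; by rewrite -E enum_valP.
Qed.

Lemma odd_liftp p : odd_perm (liftp p) = odd_perm p.
Proof.
case: (prod_tpermP p) => ts -> dts.
have -> : liftp (\prod_(t <- ts) tperm t.1 t.2)%g =
   (\prod_(t <- map (fun t => (g t.1, g t.2)) ts) tperm t.1 t.2)%g.
  rewrite big_map; elim: ts {dts} => [|t ts IH]; first by rewrite !big_nil liftp1.
  by rewrite !big_cons liftpM IH liftpT.
rewrite !odd_perm_prod ?size_map //.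
by rewrite all_map; apply: sub_all dts => t /=; rewrite (inj_eq g_inj).
Qed.

Lemma perm_on_liftp p : perm_on S (liftp p).
Proof.
apply/subsetP => x; rewrite inE; apply: contraR => xS; by rewrite liftpN.
Qed.

Definition unliftf (s : 'S_n) (i : 'I_k) : 'I_k :=
  enum_rank_in (enum_valP i) (s (g i)).

Definition unlift (s : 'S_n) : 'S_k :=
  if injectiveb (unliftf s) =P true is ReflectT H then perm (injectiveP _ H) else 1%g.

Lemma unlift_inj s : perm_on S s -> injective (unliftf s).
Proof.
move=> ps i j; rewrite /unliftf => E.
have := congr1 g E; rewrite !fintype.enum_rankK_in ?perm_closed ?enum_valP //.
by move/perm_inj/g_inj.
Qed.

Lemma unliftE s i : perm_on S s -> unlift s i = unliftf s i.
Proof.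
move=> ps; rewrite /unlift; case: eqP => [H|[]]; first by rewrite permE.
exact/injectiveP/unlift_inj.
Qed.

Lemma unliftK p : unlift (liftp p) = p.
Proof.
apply/permP => i; rewrite unliftE ?perm_on_liftp // /unliftf liftpE.
by rewrite fintype.enum_valK_in.
Qed.

Lemma liftpK s : perm_on S s -> liftp (unlift s) = s.
Proof.
move=> ps; apply: liftp_eq => [i|x xS|x xS].
- rewrite liftpE unliftE // /unliftf fintype.enum_rankK_in // (perm_closed _ ps); exact: enum_valP.
- by rewrite liftpN.
- exact: out_perm ps xS.
Qed.

Lemma detsub (A : 'M[R]_n) : \det (principal_submx A S) =
  \sum_(s : 'S_n | perm_on S s) (-1) ^+ s * \prod_(x in S) A x (s x).
Proof.
rewrite (reindex liftp) /=; last first.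
  by exists unlift => [p _|s]; [rewrite unliftK | rewrite inE => /liftpK].
rewrite (eq_bigl predT) => [|p]; last by rewrite perm_on_liftp.
apply: eq_bigr => p _; rewrite odd_liftp [in RHS]big_enum_val /=.
congr (_ * _); apply: eq_bigr => i _; by rewrite mxE liftpE.
Qed.

End DetSub.

End FileB.

Section FileC.
Set Implicit Arguments. Unset Strict Implicit. Unset Printing Implicit Defensive.
Import Num.Theory.

Section Cyc.
Local Open Scope group_scope.
Variable n : nat.
Local Notation T := 'I_n.
Implicit Types (s p q : {perm T}) (x y : T).

Definition supp s : {set T} := [set x | s x != x].

Lemma in_supp s x : (x \in supp s) = (s x != x).
Proof. by rewrite inE. Qed.

Lemma supp_s s x : (s x \in supp s) = (x \in supp s).
Proof. by rewrite !in_supp (inj_eq perm_inj). Qed.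

Lemma supp_V s x : (s^-1 x \in supp s) = (x \in supp s).
Proof. by rewrite -{2}(permKV s x) supp_s. Qed.

Lemma suppV s : supp s^-1 = supp s.
Proof.
apply/setP => x; rewrite !in_supp; congr negb; apply/eqP/eqP => E.
  by rewrite -{1}E permKV.
by rewrite -{1}E permK.
Qed.

Lemma porbit_fconnect s x y : (y \in porbit s x) = fconnect s x y.
Proof.
apply/porbit_iterP/idP => [[i ->]|H]; first exact: fconnect_iter.
by exists (findex s x y); rewrite iter_findex.
Qed.

Lemma card_porbit_order s x : #|porbit s x| = fingraph.order s x.
Proof. by apply: eq_card => y; rewrite porbit_fconnect. Qed.

Lemma porbit_iter_eq s p x : (forall y, y \in porbit s x -> p y = s y) ->
  forall i, iter i p x = iter i s x.
Proof.
move=> H; elim => //= i IH; rewrite IH H //; apply/porbit_iterP; by exists i.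
Qed.

Lemma porbit_eq s p x : (forall y, y \in porbit s x -> p y = s y) ->
  porbit p x = porbit s x.
Proof.
move=> H; apply/setP => y.
apply/porbit_iterP/porbit_iterP => -[i ->]; exists i; by rewrite (porbit_iter_eq H).
Qed.

Lemma porbit_sub2 s x : s (s x) = x -> #|porbit s x| <= 2.
Proof.
move=> H; apply: (@leq_trans #|[set x; s x]|); last by rewrite cards2; case: eqP.
apply: subset_leq_card; apply/subsetP => y /porbit_iterP[i ->].
elim: i => [|i IH] /=; first by rewrite !inE eqxx.
by case/set2P: IH => ->; rewrite !inE ?H eqxx ?orbT.
Qed.

Variable e : rel T.

Definition dcyc p : bool :=
  [&& [exists x, supp p == porbit p x], (4 %| #|supp p|)%N &
      [forall x in supp p, e x (p x)]].

Definition Eof p : {set {set T}} := [set [set x; p x] | x in supp p].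

Lemma dcyc_orb p x : dcyc p -> x \in supp p -> supp p = porbit p x.
Proof.
case/and3P => /existsP[x0 /eqP ->] _ _ xO; apply/eqP.
by rewrite eq_sym eq_porbit_mem.
Qed.

Lemma dcyc_ex p : dcyc p -> exists x, x \in supp p.
Proof. by case/and3P => /existsP[x0 /eqP ->] _ _; exists x0; exact: porbit_id. Qed.

Lemma dcyc_card p : dcyc p -> (4 <= #|supp p|)%N.
Proof.
move=> dp; case: (dcyc_ex dp) => x xs; case/and3P: dp => _ d4 _.
have : (0 < #|supp p|)%N by apply/card_gt0P; exists x.
by case/dvdnP: d4 => k ->; case: k.
Qed.

Lemma dcyc_edge p x : dcyc p -> x \in supp p -> e x (p x).
Proof. by case/and3P => _ _ /forall_inP; apply. Qed.

Lemma dcyc_no2 p x : dcyc p -> x \in supp p -> p (p x) != x.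
Proof.
move=> dp xs; apply/eqP => /porbit_sub2; rewrite -(dcyc_orb dp xs).
by move: (dcyc_card dp); case: #|_| => // [[|[|[|]]]].
Qed.

Lemma dcyc_odd p : dcyc p -> odd_perm p.
Proof.
move=> dp; case: (dcyc_ex dp) => x0 x0s.
rewrite odd_perm_orbits (bigD1 (supp p)) /=; last first.
  by rewrite (dcyc_orb dp x0s) imset_f.
rewrite big1 ?addn0; last first.
  move=> O /andP[/imsetP[y _ ->] ne]; have [ys|ys] := boolP (y \in supp p).
    by case/eqP: ne; rewrite (dcyc_orb dp ys).
  by rewrite porbit_fix ?cards1 //; apply/eqP; move: ys; rewrite in_supp negbK.
have := dcyc_card dp; case/and3P: dp => _ /dvdnP[k ->] _.
case: k => // k _.
have -> : (k.+1 * 4).-1 = (k * 4 + 3)%N by rewrite mulSn addnC addnS.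
by rewrite oddD oddM andbF.
Qed.

Hypothesis esym : symmetric e.

Lemma dcycV p : dcyc p -> dcyc p^-1.
Proof.
move=> dp; case: (dcyc_ex dp) => x0 x0s.
apply/and3P; split; rewrite suppV.
- by apply/existsP; exists x0; rewrite porbitV (dcyc_orb dp x0s).
- by case/and3P: dp.
- apply/forall_inP => x xs; have ys : p^-1 x \in supp p by rewrite supp_V.
  by have := dcyc_edge dp ys; rewrite permKV esym.
Qed.

Lemma Eof_V p : Eof p^-1 = Eof p.
Proof.
apply/setP => X; apply/imsetP/imsetP => -[x xs ->].
  rewrite suppV in xs; exists (p^-1 x); first by rewrite supp_V.
  by rewrite permKV setUC.
exists (p x); first by rewrite suppV supp_s.
by rewrite permK setUC.
Qed.

Lemma cyc_verts_Eof p : cyc_verts (Eof p) = supp p.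
Proof.
apply/setP => y; apply/bigcupP/idP => [[X /imsetP[x xs ->]]|ys].
  by case/set2P => ->; rewrite ?supp_s.
by exists [set y; p y]; [apply/imsetP; exists y | rewrite set21].
Qed.

Lemma set2_eq (a b c d : T) : [set a; b] = [set c; d] ->
  (a = c /\ b = d) \/ (a = d /\ b = c).
Proof.
move=> E.
have ha : a \in [set c; d] by rewrite -E set21.
have hb : b \in [set c; d] by rewrite -E set22.
have hc : c \in [set a; b] by rewrite E set21.
have hd : d \in [set a; b] by rewrite E set22.
case/set2P: ha => Ha; case/set2P: hb => Hb; subst.
- by left; split => //; move: hd => /set2P[] ->.
- by left.
- by right.
- by left; split => //; move: hc => /set2P[] ->.
Qed.

Lemma Eof_local p q x : Eof q = Eof p -> x \in supp q ->
  q x = p x \/ q x = p^-1 x.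
Proof.
move=> E xs; have : [set x; q x] \in Eof p by rewrite -E; apply/imsetP; exists x.
case/imsetP => y ys /set2_eq [[-> ->]|[-> ->]]; [left|right] => //.
by rewrite permK.
Qed.

Lemma rigid p q x0 : dcyc p -> dcyc q -> Eof q = Eof p -> x0 \in supp p ->
  q x0 = p x0 -> q = p.
Proof.
move=> dp dq E x0s qx0.
have Sq : supp q = supp p by rewrite -cyc_verts_Eof E cyc_verts_Eof.
have it : forall i, iter i p x0 \in supp p.
  by move=> i; rewrite (dcyc_orb dp x0s); apply/porbit_iterP; exists i.
have key : forall i, q (iter i p x0) = p (iter i p x0).
  elim => // i IH; rewrite /=; set y := iter i p x0.
  have ys : p y \in supp q by rewrite Sq supp_s it.
  case: (Eof_local E ys) => // H.
  have := @dcyc_no2 q y dq; rewrite Sq it => /(_ isT).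
  by rewrite IH H permK eqxx.
apply/permP => x; have [xs|xs] := boolP (x \in supp p).
  by move: xs; rewrite (dcyc_orb dp x0s) => /porbit_iterP[i ->].
have xq : x \notin supp q by rewrite Sq.
by move: xs xq; rewrite !in_supp !negbK => /eqP -> /eqP ->.
Qed.

Lemma rigid2 p q : dcyc p -> dcyc q -> Eof q = Eof p -> q = p \/ q = p^-1.
Proof.
move=> dp dq E; case: (dcyc_ex dp) => x0 x0s.
have x0q : x0 \in supp q by rewrite -cyc_verts_Eof E cyc_verts_Eof.
case: (Eof_local E x0q) => H; [left|right].
  exact: rigid H.
apply: (@rigid p^-1 q x0 (dcycV dp) dq) => //; [by rewrite Eof_V | by rewrite suppV].
Qed.

End Cyc.

End FileC.

Section FileD.
Set Implicit Arguments. Unset Strict Implicit. Unset Printing Implicit Defensive.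
Import Num.Theory.

Section Orient.
Local Open Scope group_scope.
Variable n : nat.
Local Notation T := 'I_n.
Variable e : rel T.
Hypothesis esym : symmetric e.
Implicit Types (p q : {perm T}).

Lemma mem_orb p x0 x : dcyc e p -> x0 \in supp p ->
  (x \in fingraph.orbit p x0) = (x \in supp p).
Proof.
by move=> dp x0s; rewrite -fconnect_orbit -porbit_fconnect -(dcyc_orb dp x0s).
Qed.

Lemma is4k_E p : dcyc e p -> is_4kcycle e (Eof p).
Proof.
move=> dp; case: (dcyc_ex dp) => x0 x0s.
set s := fingraph.orbit p x0.
have ss : size s = #|supp p|.
  by rewrite size_orbit -card_porbit_order -(dcyc_orb dp x0s).
have Hl : (#|supp p| < n.+1)%N by rewrite ltnS; apply: leq_trans (max_card _) _; rewrite card_ord.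
have ssz : size s == Ordinal Hl by rewrite ss.
have fc : fcycle p s by apply: cycle_orbit; exact: perm_inj.
apply/existsP; exists (Ordinal Hl); apply/and3P; split => /=.
- by apply: leq_trans (dcyc_card dp).
- by case/and3P: dp.
apply/existsP; exists (Tuple ssz); apply/and3P; split => /=.
- exact: orbit_uniq.
- apply: cycle_from_next; first exact: orbit_uniq.
  move=> x xs; rewrite (nextE fc xs); apply: dcyc_edge => //.
  by rewrite -(mem_orb _ dp x0s).
- apply/eqP/setP => X; apply/imsetP/imsetP => -[x xs ->].
    exists x; first by rewrite (mem_orb _ dp x0s).
    by rewrite (nextE fc) // (mem_orb _ dp x0s).
  have xs' : x \in s by [].
  exists x; first by rewrite -(mem_orb _ dp x0s).
  by rewrite (nextE fc).
Qed.


Lemma count2 C : is_4kcycle e C -> #|[set q | dcyc e q && (Eof q == C)]| = 2.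
Proof.
case/existsP => l /and3P[l0 l4 /existsP[s /and3P[Us cs /eqP ->]]].
pose r := perm (can_inj (prev_next Us)).
have rE : forall x, r x = next s x by move=> x; rewrite permE.
have fc : fcycle (next s) s := cycle_next Us.
have fr : forall x y, fconnect r x y = fconnect (next s) x y.
  by move=> x y; apply: eq_fconnect.
have sz : size s = l := size_tuple s.
have l4' : (4 <= l)%N by case/dvdnP: l4 l0 => k ->; case: k.
have ms : forall x, (x \in supp r) = (x \in s).
  move=> x; rewrite in_supp rE; have [xs|xs] := boolP (x \in s); last first.
    by rewrite next_nth (negbTE xs) eqxx.
  apply/negP => /eqP fx.
  have := card_porbit_order r x; rewrite porbit_fix ?rE // cards1.
  rewrite /fingraph.order (eq_card (fr x)) -/(fingraph.order (next s) x).
  by rewrite (order_cycle fc Us xs) sz => E; move: l4'; rewrite -E.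
have [x0 x0s] : exists x0, x0 \in s.
  by exists (tnth s (Ordinal l0)); exact: mem_tnth.
have Sr : supp r = porbit r x0.
  by apply/setP => y; rewrite ms porbit_fconnect fr (fconnect_cycle fc x0s).
have dr : dcyc e r.
  apply/and3P; split.
  - by apply/existsP; exists x0; rewrite Sr.
  - by rewrite (eq_card ms) (card_uniqP Us) sz.
  - by apply/forall_inP => x; rewrite ms rE => xs; apply: next_cycle.
have Er : Eof r = cyc_edges s.
  apply/setP => X; apply/imsetP/imsetP => -[x xs ->]; exists x;
    by rewrite ?ms ?rE // -ms.
have rr : r != r^-1.
  apply/eqP => E; have := dcyc_no2 dr (x := x0); rewrite ms x0s => /(_ isT).
  by rewrite {1}E permK eqxx.
rewrite (_ : [set q | _] = [set r; r^-1]); first by rewrite cards2 rr.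
 apply/setP => q; rewrite !inE.
apply/andP/orP => [[dq /eqP Eq]|[/eqP->|/eqP->]].
- have : Eof q = Eof r by rewrite Er.
  by case/(rigid2 esym dr dq) => ->; rewrite eqxx ?orbT; [left|right].
- by rewrite dr Er.
- by rewrite dcycV // Eof_V // Er.
Qed.

End Orient.

End FileD.

Section FileE.
Set Implicit Arguments. Unset Strict Implicit. Unset Printing Implicit Defensive.
Import Num.Theory.
Local Open Scope ring_scope.

Section Gen.
Variable R : comNzRingType.

Lemma prod_bool (I : finType) (Q : pred I) (b : pred I) :
  \prod_(i | Q i) ((b i)%:R : R) = ([forall i, Q i ==> b i])%:R.
Proof.
case: forallP => H.
  by rewrite big1 // => i Qi; move: (H i); rewrite Qi => /= ->.
have [i] : exists i, ~~ (Q i ==> b i).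
  by apply/existsP; rewrite -negb_forall; apply/forallP.
rewrite negb_imply => /andP[Qi bi].
by rewrite (bigD1 i) //= (negbTE bi) mul0r.
Qed.

Lemma sum_tuple_prod (T : finType) z (P : 'I_z -> pred T) :
  \sum_(u : z.-tuple T | [forall i, P i (tnth u i)]) (1 : R) =
  \prod_(i < z) (#|P i|)%:R.
Proof.
have -> : \prod_(i < z) (#|P i|)%:R = \prod_(i < z) \sum_(q : T) ((P i q)%:R : R).
  apply: eq_bigr => i _; rewrite -sum1_card natr_sum big_mkcond /=.
  by apply: eq_bigr => j _; rewrite unfold_in; case: (P i j).
rewrite bigA_distr_bigA /=.
rewrite (reindex (fun u : z.-tuple T => [ffun i => tnth u i])) /=; last first.
  exists (fun f : {ffun 'I_z -> T} => [tuple f i | i < z]) => [u _|f _].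
    by apply: eq_from_tnth => i; rewrite tnth_mktuple ffunE.
  by apply/ffunP => i; rewrite ffunE tnth_mktuple.
rewrite big_mkcond /=; apply: eq_bigr => u _.
rewrite (eq_bigr (fun i => ((P i (tnth u i))%:R : R))) => [|i _]; last by rewrite ffunE.
rewrite prod_bool (eq_forallb (fun i => implyTb _)); by case: ifP.
Qed.

End Gen.

Section Tup.
Variable n : nat.
Local Notation T := 'I_n.
Variable e : rel T.
Hypothesis esym : symmetric e.

Definition VU z (u : z.-tuple {perm T}) : {set T} := \bigcup_(i < z) supp (tnth u i).

Definition DD z (u : z.-tuple {perm T}) : bool :=
  all (dcyc e) u && [forall i, forall j, (i != j) ==>
     [disjoint supp (tnth u i) & supp (tnth u j)]].

Lemma P4 z (F : {set T} -> rat) :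
  \sum_(u : z.-tuple {perm T} | DD u) F (VU u) =
  2 ^+ z * \sum_(t : z.-tuple {set {set T}} | disj_4kcycle_tuple e t) F (tuple_verts t).
Proof.
rewrite (partition_big (fun u => map_tuple (@Eof n) u) (@disj_4kcycle_tuple n e z)) /=;
  last first.
  move=> u /andP[du dj]; apply/andP; split.
    by rewrite all_map; apply: sub_all du => q /= dq; exact: is4k_E.
  apply/forallP => i; apply/forallP => j; apply/implyP => ij.
  rewrite !tnth_map !cyc_verts_Eof.
  by move/forallP: dj => /(_ i) /forallP /(_ j) /implyP; apply.
rewrite mulr_sumr; apply: eq_bigr => t dt.
have VE : forall u : z.-tuple {perm T}, map_tuple (@Eof n) u == t -> VU u = tuple_verts t.
  move=> u /eqP <-; apply: eq_bigr => i _; by rewrite tnth_map cyc_verts_Eof.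
rewrite (eq_bigr (fun _ => 1 * F (tuple_verts t))); last first.
  by move=> u /andP[_ /VE ->]; rewrite mul1r.
rewrite -big_distrl /=; congr (_ * _).
have [at4 dj] := andP dt.
rewrite (eq_bigl (fun u : z.-tuple {perm T} => [forall i, (fun i q => dcyc e q && (Eof q == tnth t i)) i (tnth u i)])); last first.
  move=> u; apply/andP/forallP => [[/andP[du _] /eqP mE] i|H].
    apply/andP; split; first by apply: (all_tnthP du).
    by rewrite -mE tnth_map.
  have mE : map_tuple (@Eof n) u = t.
    by apply: eq_from_tnth => i; rewrite tnth_map; case/andP: (H i) => _ /eqP.
  split; last by rewrite mE.
  apply/andP; split; first by apply/all_tnthP => i; case/andP: (H i).
  apply/forallP => i; apply/forallP => j; apply/implyP => ij.
  have tE : forall k, Eof (tnth u k) = tnth t k by move=> k; rewrite -mE tnth_map.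
  rewrite -!cyc_verts_Eof !tE.
  by move/forallP: dj => /(_ i) /forallP /(_ j) /implyP; apply.
rewrite (sum_tuple_prod _ (fun i q => dcyc e q && (Eof q == tnth t i))) (eq_bigr (fun _ => 2%:R)) => [|i _].
  by rewrite prodr_const card_ord.
congr (_ %:R); rewrite -(count2 esym (all_tnthP at4 i)).
by apply: eq_card => q; rewrite inE.
Qed.

End Tup.

End FileE.

Section FileF.
Set Implicit Arguments. Unset Strict Implicit. Unset Printing Implicit Defensive.
Import Num.Theory.

Section Sig.
Local Open Scope group_scope.
Variable n : nat.
Local Notation T := 'I_n.
Variable e : rel T.
Hypothesis esym : symmetric e.
Variable f : T -> bool.
Hypothesis fbip : forall i j, e i j -> f i != f j.
Implicit Types (p q s : {perm T}).

Definition valid s := [forall x, e x (s x)].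
Definition subp p s := [forall x in supp p, s x == p x].
Definition Fd s : {set {perm T}} := [set p | dcyc e p && subp p s].
Definition Fo s : {set {set T}} := [set O in porbits s | (4 %| #|O|)%N].

Lemma f_iter s x k : valid s -> f (iter k s x) = f x (+) odd k.
Proof.
move=> vs; elim: k => [|k IH] /=; first by rewrite addbF.
have := fbip (forallP vs (iter k s x)); rewrite IH.
by case: (f (s (iter k s x))); case: (f x); case: (odd k).
Qed.

Lemma even_orbit s x : valid s -> ~~ odd #|porbit s x|.
Proof.
move=> vs; have := f_iter x #|porbit s x| vs; rewrite iter_porbit.
by case: (f x); case: (odd _).
Qed.

Lemma Fd_orbit p s x : p \in Fd s -> x \in supp p -> supp p = porbit s x.
Proof.
rewrite inE => /andP[dp sp] xs; rewrite (dcyc_orb dp xs); symmetry.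
apply: porbit_eq => y; rewrite -(dcyc_orb dp xs) => ys.
by apply/eqP; apply: (forall_inP sp).
Qed.

Lemma Fd_inj s p q : p \in Fd s -> q \in Fd s -> supp p = supp q -> p = q.
Proof.
move=> pF qF E; apply/permP => x; have [xs|xs] := boolP (x \in supp p).
  move: pF qF; rewrite !inE => /andP[_ /forall_inP sp] /andP[_ /forall_inP sq].
  by rewrite -(eqP (sp x xs)) (eqP (sq x _)) // -E.
have xq : x \notin supp q by rewrite -E.
by move: xs xq; rewrite !in_supp !negbK => /eqP -> /eqP ->.
Qed.

Lemma Fd_disj s p q : p \in Fd s -> q \in Fd s -> p != q ->
  [disjoint supp p & supp q].
Proof.
move=> pF qF; rewrite -setI_eq0; apply: contraR => /set0Pn[x]; rewrite inE => /andP[xp xq].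
by apply/eqP; apply: (Fd_inj pF qF); rewrite (Fd_orbit pF xp) (Fd_orbit qF xq).
Qed.

Definition restrf s (O : {set T}) x := if x \in O then s x else x.

Lemma restrf_inj s x0 : injective (restrf s (porbit s x0)).
Proof.
move=> x y; rewrite /restrf.
case: ifP => xO; case: ifP => yO //.
- exact: perm_inj.
- by move=> E; move: yO; rewrite -E porbit_s xO.
- by move=> E; move: xO; rewrite E porbit_s yO.
Qed.

Definition restr s x0 : {perm T} := perm (@restrf_inj s x0).

Lemma card_Fd s : valid s -> #|Fd s| = #|Fo s|.
Proof.
move=> vs.
have -> : Fo s = (@supp n) @: Fd s.
  apply/setP => O; apply/idP/imsetP => [|[p pF ->]]; last first.
    case: (@dcyc_ex n e p _) => [|x xs]; first by move: pF; rewrite inE => /andP[].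
    rewrite inE (Fd_orbit pF xs) imset_f //= -(Fd_orbit pF xs).
    by move: pF; rewrite inE => /andP[/and3P[]].
  rewrite inE => /andP[/imsetP[x0 _ ->] d4].
  pose r := restr s x0.
  have rE : forall x, r x = restrf s (porbit s x0) x by move=> x; rewrite permE.
  have Sr : supp r = porbit s x0.
    apply/setP => x; rewrite in_supp rE /restrf; case: ifP => xO; last by rewrite eqxx.
    apply/negP => /eqP sx; move: d4.
    have -> : porbit s x0 = porbit s x by apply/eqP; rewrite eq_porbit_mem porbit_sym.
    by rewrite porbit_fix // cards1.
  exists r; last by rewrite Sr.
  rewrite inE; apply/andP; split.
    apply/and3P; split; rewrite ?Sr //.
    - apply/existsP; exists x0; rewrite (@porbit_eq n s r x0) // => y yO.
      by rewrite rE /restrf yO.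
    - apply/forall_inP => x xO; rewrite rE /restrf xO; exact: (forallP vs).
  by apply/forall_inP => x; rewrite Sr rE /restrf => ->.
symmetry; apply: card_in_imset => p q pF qF; exact: (Fd_inj pF qF).
Qed.


Lemma sgn_aux a : (0 < a)%N ->
  ((-1) ^+ (a + (a.*2).-1) = (if (4 %| a.*2)%N then -1 else 1) :> rat)%R.
Proof.
case: a => // b _; rewrite -signr_odd doubleS /= oddD /= odd_double.
have -> : (4 %| (b.+1).*2)%N = ~~ odd b.+1.
  by rewrite -muln2 -dvdn2 -[4%N]/(2 * 2)%N dvdn_pmul2r.
by rewrite /=; case: (odd b).
Qed.

Lemma sign_valid s : ~~ odd n -> valid s ->
  ((-1) ^+ (n./2) * (-1) ^+ (odd_perm s) = (-1) ^+ #|Fo s| :> rat)%R.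
Proof.
move=> ne vs; set P := porbits s.
have ev : forall O, O \in P -> #|O| = (#|O|./2).*2.
  move=> O /imsetP[x _ ->].
  by rewrite -[in LHS](odd_double_half #|porbit s x|) (negbTE (even_orbit x vs)).
have hn : n./2 = (\sum_(O in P) #|O|./2)%N.
  have hsum : (\sum_(O in P) #|O| = n)%N by rewrite porbits_card card_ord.
  have -> : n./2 = (\sum_(O in P) #|O|)./2 by rewrite hsum.
  rewrite (eq_bigr (fun O : {set T} => (#|O|./2).*2)) => [|O /ev //].
  by rewrite -(big_morph double doubleD double0) doubleK.
rewrite hn odd_perm_orbits -/P signr_odd -exprD -big_split /= -prodrXr.
rewrite (eq_bigr (fun O : {set T} => if (4 %| #|O|)%N then -1 else 1)%R); last first.
  move=> O OP; move: (ev O OP); set a := #|O|./2 => h; rewrite h sgn_aux //.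
  rewrite lt0n; apply/eqP => a0; move: h; rewrite a0 /=.
  case/imsetP: OP => x _ ->; move=> h; have := card_porbit_neq0 s x.
  by rewrite h.
rewrite -big_mkcondr /=.
rewrite (eq_bigl (fun O => O \in Fo s)) => [|O]; last by rewrite inE.
by rewrite prodr_const.
Qed.

End Sig.

End FileF.

Section FileG.
Set Implicit Arguments. Unset Strict Implicit. Unset Printing Implicit Defensive.
Import Num.Theory.

Section Main2.
Local Open Scope group_scope.
Variable n : nat.
Local Notation T := 'I_n.
Variable e : rel T.
Hypothesis esym : symmetric e.
Implicit Types (p q s : {perm T}).

Lemma Fd_bound m s :
  (forall Cs : {set {set {set T}}},
     (forall C, C \in Cs -> is_4kcycle e C) ->
     (forall C D, C \in Cs -> D \in Cs -> C != D ->
        [disjoint cyc_verts C & cyc_verts D]) ->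
     (#|Cs| <= m)%N) -> (#|Fd e s| <= m)%N.
Proof.
move=> Hm.
have inj : {in Fd e s &, injective (@Eof n)}.
  move=> p q pF qF E; apply: (Fd_inj pF qF).
  by rewrite -cyc_verts_Eof E cyc_verts_Eof.
rewrite -(card_in_imset inj); apply: Hm.
  move=> C /imsetP[p pF ->]; apply: is4k_E.
  by move: pF; rewrite inE => /andP[].
move=> C D /imsetP[p pF ->] /imsetP[q qF ->] ne.
rewrite !cyc_verts_Eof; apply: (Fd_disj pF qF).
by apply: contraNneq ne => ->.
Qed.

Definition PU (us : seq {perm T}) : {perm T} := \prod_(p <- us) p.

Lemma PU_out us x : (forall p, p \in us -> x \notin supp p) -> PU us x = x.
Proof.
elim: us => [|q us IH] H; first by rewrite /PU big_nil perm1.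
rewrite /PU big_cons permM.
have qx : q x = x by apply/eqP; move: (H q (mem_head _ _)); rewrite in_supp negbK.
rewrite qx IH // => p pu; apply: H; by rewrite inE pu orbT.
Qed.

Lemma PU_in us p x : uniq us ->
  (forall p q, p \in us -> q \in us -> p != q -> [disjoint supp p & supp q]) ->
  p \in us -> x \in supp p -> PU us x = p x.
Proof.
elim: us => // q us IH /andP[qn Uu] Dj pu xs; rewrite /PU big_cons permM.
have Dj' : forall p q, p \in us -> q \in us -> p != q -> [disjoint supp p & supp q].
  by move=> p1 q1 p1u q1u; apply: Dj; rewrite inE ?p1u ?q1u orbT.
have [pq|pq] := eqVneq p q.
  subst p; apply: PU_out => r ru.
  have rq : q != r by apply: contraNneq qn => ->.
  have ru' : r \in q :: us by rewrite inE ru orbT.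
  have := Dj q r (mem_head _ _) ru' rq.
  by move=> /disjointFr H; rewrite H // supp_s.
have pu' : p \in us by move: pu; rewrite inE (negbTE pq).
have qx : q x = x.
  have := Dj p q pu (mem_head _ _) pq; move/disjointFr => /(_ x xs).
  by rewrite in_supp => /negbFE /eqP.
by rewrite qx; apply: IH.
Qed.

Lemma odd_PU us : all (dcyc e) us -> odd_perm (PU us) = odd (size us).
Proof.
elim: us => [|q us IH]; first by rewrite /PU big_nil odd_perm1.
move=> /andP[dq du]; rewrite /PU big_cons odd_permM -/(PU us) IH // (dcyc_odd dq). by [].
Qed.


Lemma VU_mem z (u : z.-tuple {perm T}) x :
  reflect (exists2 p, p \in u & x \in supp p) (x \in VU u).
Proof.
apply: (iffP bigcupP) => [[i _ xs]|[p /tnthP[i ->] xs]].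
  by exists (tnth u i) => //; apply: mem_tnth.
by exists i.
Qed.

Lemma DD_list z (u : z.-tuple {perm T}) : DD e u ->
  forall p q, p \in u -> q \in u -> p != q -> [disjoint supp p & supp q].
Proof.
case/andP => _ /forallP H p q /tnthP[i ->] /tnthP[j ->] ne.
have ij : i != j by apply: contraNneq ne => ->.
by move: (H i) => /forallP /(_ j) /implyP; apply.
Qed.

Lemma DD_uniq z (u : z.-tuple {perm T}) : DD e u -> uniq u.
Proof.
move=> Du; apply/tuple_uniqP => i j E; apply/eqP; apply/negP => ne.
case/andP: Du => /all_tnthP /(_ i) di /forallP /(_ i) /forallP /(_ j) /implyP /(_ (introN idP ne)).
rewrite E -setI_eq0 setIid => /eqP S0.
by case: (dcyc_ex di) => x; rewrite E S0 inE.
Qed.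

Lemma Fd_DD s z (u : z.-tuple {perm T}) :
  all (fun p => p \in Fd e s) u -> uniq u -> DD e u.
Proof.
move=> /allP aF Uu; apply/andP; split.
  by apply/allP => p /aF; rewrite inE => /andP[].
apply/forallP => i; apply/forallP => j; apply/implyP => ij.
apply: (Fd_disj (aF _ (mem_tnth i u)) (aF _ (mem_tnth j u))).
by apply: contra ij => /eqP /((tuple_uniqP u) Uu) ->.
Qed.

Lemma cond_eq s z (u : z.-tuple {perm T}) :
  (all (fun p => p \in Fd e s) u && uniq u) =
  (DD e u && all (fun p => subp p s) u).
Proof.
apply/andP/andP => [[aF Uu]|[Du aS]].
  split; first exact: Fd_DD aF Uu.
  by apply/allP => p /(allP aF); rewrite inE => /andP[].
split; last exact: DD_uniq.
apply/allP => p pu; rewrite inE (allP aS p pu) andbT.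
by case/andP: Du => /allP /(_ p pu).
Qed.

Lemma PU_tin z (u : z.-tuple {perm T}) p x : DD e u -> p \in u -> x \in supp p ->
  PU u x = p x.
Proof. move=> Du; apply: PU_in; [exact: DD_uniq | exact: DD_list]. Qed.

Lemma PU_tout z (u : z.-tuple {perm T}) x : x \notin VU u -> PU u x = x.
Proof.
move=> xV; apply: PU_out => p pu; apply: contra xV => xs; apply/VU_mem.
by exists p.
Qed.

Lemma sigma_cond z (u : z.-tuple {perm T}) s : DD e u ->
  (valid e (PU u * s) && all (fun p => subp p (PU u * s)) u) =
  (perm_on (~: VU u) s && [forall x in ~: VU u, e x (s x)]).
Proof.
move=> Du.
have dc : forall p, p \in u -> dcyc e p by case/andP: Du => /allP.
apply/andP/andP => [[vs aS]|[ps vW]]; split.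
- apply/subsetP => x; rewrite !inE; apply: contraR; rewrite negbK => /VU_mem[p pu xs].
  have ys : p^-1 x \in supp p by rewrite supp_V.
  have := forall_inP (allP aS p pu) _ ys; rewrite permM (PU_tin Du pu ys) permKV.
  by move=> /eqP ->.
- apply/forall_inP => x; rewrite inE => xV.
  by have := forallP vs x; rewrite permM PU_tout.
- apply/forallP => x; rewrite permM; have [xV|xV] := boolP (x \in VU u).
    case/VU_mem: xV => p pu xs; rewrite (PU_tin Du pu xs) (out_perm ps).
      exact: dcyc_edge (dc p pu) xs.
    rewrite inE negbK; apply/VU_mem; exists p => //; by rewrite supp_s.
  by rewrite PU_tout //; apply: (forall_inP vW); rewrite inE.
- apply/allP => p pu; apply/forall_inP => x xs.
  rewrite permM (PU_tin Du pu xs) (out_perm ps) //.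
  rewrite inE negbK; apply/VU_mem; exists p => //; by rewrite supp_s.
Qed.

End Main2.

End FileG.

Section FileH.
Set Implicit Arguments. Unset Strict Implicit. Unset Printing Implicit Defensive.
Import Num.Theory.
Local Open Scope ring_scope.

Lemma incl_excl (T : finType) (F : {set T}) m : (#|F| <= m)%N ->
  \sum_(z < m.+1) (2 ^+ z / (z`!)%:R) *
     \sum_(u : z.-tuple T | all (fun p => p \in F) u && uniq u) (-1) ^+ (#|F| + z)
  = 1 :> rat.
Proof.
move=> fm; set f := #|F|.
have term : forall z : nat, (2 ^+ z / (z`!)%:R) *
     \sum_(u : z.-tuple T | all (fun p => p \in F) u && uniq u) (-1) ^+ (f + z)
   = (-1) ^+ (f - z) * 2 ^+ z *+ 'C(f, z) :> rat.
  move=> z; rewrite sumr_const.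
  have -> : #|[pred u : z.-tuple T | all (fun p => p \in F) u && uniq u]| = (f ^_ z)%N.
    rewrite -(card_uniq_tuples _ (fun p => p \in F)); apply: eq_card => u; by rewrite inE.
  case: (leqP z f) => zf; last first.
    by rewrite ffact_small // bin_small // !mulr0n mulr0.
  rewrite -bin_ffact.
  have -> : (-1) ^+ (f + z) = (-1) ^+ (f - z) :> rat.
    by rewrite -(subnK zf) -addnA addnn -signr_odd oddD odd_double addbF signr_odd subnK.
  have nz : (z`!)%:R != 0 :> rat by rewrite pnatr_eq0 -lt0n fact_gt0.
  rewrite -[_ *+ (_ * _)]mulr_natr natrM -[RHS]mulr_natr.
  by field.
rewrite (eq_bigr (fun z : 'I_m.+1 => (-1) ^+ (f - z) * 2 ^+ z *+ 'C(f, z))) => [|z _];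
  last exact: term.
rewrite -(big_mkord xpredT (fun z => (-1) ^+ (f - z) * 2 ^+ z *+ 'C(f, z))).
rewrite (big_cat_nat _ (n := f.+1)) //=.
rewrite [X in _ + X]big1_seq ?addr0 => [|i /andP[_]]; last first.
  by rewrite mem_index_iota => /andP[fi _]; rewrite bin_small.
have h12 : (-1 + 2 : rat) = 1 by rewrite addrC -[2]/(1 + 1) addrK.
by rewrite big_mkord -exprDn h12 expr1n.
Qed.

End FileH.

Section FileI.
Set Implicit Arguments. Unset Strict Implicit. Unset Printing Implicit Defensive.
Import Num.Theory.
Local Open Scope ring_scope.

Section Final.
Variable n : nat.
Local Notation T := 'I_n.
Variable e : rel T.
Hypothesis esym : symmetric e.
Variable f : T -> bool.
Hypothesis fbip : forall i j, e i j -> f i != f j.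

Lemma n_even s : valid e s -> ~~ odd n.
Proof.
move=> vs; rewrite -[n]card_ord -(porbits_card s).
apply: (big_ind (fun k => ~~ odd k)) => //.
  by move=> x y hx hy; rewrite oddD (negbTE hx) (negbTE hy).
by move=> O /imsetP[x _ ->]; apply: (even_orbit fbip).
Qed.

Lemma per_valid : permanent (adjmx e) = \sum_(s : 'S_n) ((valid e s)%:R : rat).
Proof.
apply: eq_bigr => s _.
rewrite (eq_bigr (fun i => ((e i (s i))%:R : rat))) => [|i _]; last by rewrite mxE.
rewrite (prod_bool _ xpredT (fun i => e i (s i))) (eq_forallb (fun i => implyTb _)); by [].

Qed.

Lemma detW (W : {set T}) :
  \sum_(s : 'S_n | perm_on W s && [forall x in W, e x (s x)]) ((-1) ^+ (odd_perm s) : rat)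
  = \det (principal_submx (adjmx e) W).
Proof.
rewrite detsub big_mkcondr /=; apply: eq_bigr => s _.
rewrite (eq_bigr (fun i => ((e i (s i))%:R : rat))) => [|i _]; last by rewrite mxE.
rewrite (prod_bool _ (fun x => x \in W) (fun i => e i (s i))).
by case: ifP => _; rewrite ?mulr1 ?mulr0.
Qed.

Lemma P3 s z (u : z.-tuple {perm T}) : ~~ odd n -> valid e s ->
  all (fun p => p \in Fd e s) u -> uniq u ->
  (-1) ^+ (#|Fd e s| + z) =
  (-1) ^+ (n./2) * (-1) ^+ (odd_perm ((PU u)^-1 * s)%g) :> rat.
Proof.
move=> ne vs aF Uu.
have du : all (dcyc e) u by apply/allP => p /(allP aF); rewrite inE => /andP[].
have oPU : odd_perm (PU u) = odd z by rewrite (odd_PU du) size_tuple.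
have os : odd_perm s = odd z (+) odd_perm ((PU u)^-1 * s)%g.
  by rewrite -oPU -odd_permM mulKVg.
have H := sign_valid fbip ne vs; rewrite -(card_Fd vs) in H.
rewrite exprD -H os signr_addb signr_odd.
have hz : (-1) ^+ z * (-1) ^+ z = 1 :> rat.
  by rewrite -exprD addnn -signr_odd odd_double.
rewrite [(-1) ^+ z * _]mulrC -!mulrA hz mulr1.
by [].
Qed.

End Final.

End FileI.

Local Open Scope ring_scope.

Theorem theorem1 (n : nat) (e : rel 'I_n) (m : nat) :
  simple_graph e -> bipartite e ->
  (forall Cs : {set {set {set 'I_n}}},
     (forall C, C \in Cs -> is_4kcycle e C) ->
     (forall C D, C \in Cs -> D \in Cs -> C != D ->
        [disjoint cyc_verts C & cyc_verts D]) ->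
     (#|Cs| <= m)%N) ->
  permanent (adjmx e) =
    (if odd n then 0
     else (-1) ^+ (n./2) *
          \sum_(z < m.+1)
            (4 ^+ z / (z`!)%:R) *
            \sum_(t : z.-tuple {set {set 'I_n}} | disj_4kcycle_tuple e t)
               det_del e t).
Proof.
move=> [esym _] [f fbip] Hm.
rewrite per_valid; case: ifP => on.
  rewrite big1 // => s _; case vs: (valid e s) => //.
  by move: (n_even fbip vs); rewrite on.
have ne : ~~ odd n by rewrite on.
set K : rat := (-1) ^+ n./2.
have step1 : forall s : 'S_n, ((valid e s)%:R : rat) =
  \sum_(z < m.+1) (2 ^+ z / (z`!)%:R) *
    \sum_(u : z.-tuple {perm 'I_n} | valid e s && (all (fun p => p \in Fd e s) u && uniq u))
       K * (-1) ^+ (odd_perm ((PU u)^-1 * s)%g).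
  move=> s; case vs: (valid e s); last first.
    by rewrite big1 // => z _; rewrite big_pred0 ?mulr0.
  transitivity (1 : rat); first by [].
  rewrite -[LHS](incl_excl (Fd_bound s Hm)); apply: eq_bigr => z _.
  congr (_ * _); apply: eq_bigr => u /andP[aF Uu].
  exact: (P3 fbip ne vs aF Uu).
rewrite (eq_bigr _ (fun s _ => step1 s)) exchange_big /= mulr_sumr.
apply: eq_bigr => z _; rewrite -mulr_sumr.
rewrite (exchange_big_dep xpredT) //=.
have inner : forall u : z.-tuple {perm 'I_n},
  \sum_(s | [&& valid e s, all (fun p => p \in Fd e s) u & uniq u])
     K * (-1) ^+ (odd_perm ((PU u)^-1 * s)%g) =
  if DD e u then K * \det (principal_submx (adjmx e) (~: VU u)) else 0.
  move=> u.
  rewrite (eq_bigl (fun s => DD e u && (valid e s && all (fun p => subp p s) u))); last first.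
    by move=> s; rewrite cond_eq andbCA.
  case Du: (DD e u); last by rewrite big_pred0.
  rewrite (reindex_inj (mulgI (PU u))) /=.
  rewrite (eq_bigl (fun s => perm_on (~: VU u) s && [forall x in ~: VU u, e x (s x)]));
    last by move=> s; exact: sigma_cond.
  rewrite -detW mulr_sumr; apply: eq_bigr => s _; by rewrite mulKg.
rewrite (eq_bigr _ (fun u _ => inner u)) -big_mkcond /= -mulr_sumr.
have := P4 esym z (fun W => \det (principal_submx (adjmx e) (~: W))); rewrite /= => ->.
rewrite /det_del.
clear step1 inner; move: (\sum_(t | _) _) => S; move: K => K0.
rewrite (_ : 4 = 2 * 2) // exprMn.
move: (2 ^+ z) (z`!%:R^-1) => a b.
ring.
Qed.
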